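(* Let $\phi$ be a quantifier-free sentence of $\mathscr{L}_{\max}$. For every $f:\mathbb{N}\to\mathbb{N}$, $\mathscr{M}_f\models\phi$ if and only if there is some $k\in\mathbb{N}$ such that for every $g:\mathbb{N}\to\mathbb{N}$ extending $(f(0),\ldots,f(k))$, $\mathscr{M}_g\models\phi$, and checking $\mathscr{M}_g\models\phi$ via the inductive definition of the semantics never requires querying $g(i)$ for any $i>k$.
   Context: $\mathbb{N}^{<\mathbb{N}}$ denotes the set of finite sequences of naturals. The language $\mathscr{L}_{\max}$ is a first-order language extended with ellipses. Its symbols: a constant symbol $\mathbf{n}$ (also written $\bar n$) for each $n\in\mathbb{N}$; an $n$-ary function symbol $\tilde w$ for each $w:\mathbb{N}^n\to\mathbb{N}$ ($n>0$); an $n$-ary predicate symbol $\tilde p$ for each $p\subseteq\mathbb{N}^n$ ($n>0$); an ''$\mathbb{N}^{<\mathbb{N}}$-ary'' function symbol $\tilde G$ for each $G:\mathbb{N}^{<\mathbb{N}}\to\mathbb{N}$; one extra unary function symbol $\mathbf{f}$; and, for each variable $x$, a logical symbol $\cdots_x$. Terms and their free variables: a variable $x$ (free variables $\{x\}$); a constant (no free variables); $h(t_1,\ldots,t_n)$ for $h$ an $n$-ary or $\mathbb{N}^{<\mathbb{N}}$-ary function symbol and terms $t_i$ (free variables the union); and, for an $\mathbb{N}^{<\mathbb{N}}$-ary $G$, terms $u,v$ and a variable $x$, the term $G(u(\mathbf{0}),\cdots_x,u(v))$ with free variables $(FV(u)\setminus\{x\})\cup FV(v)$. Formulas are built from these terms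 as usual. Substitution is defined as usual with two new cases: for $y\neq x$, $G(u(\mathbf{0}),\cdots_x,u(v))(y|t)=G(u(y|t)(\mathbf{0}),\cdots_x,u(y|t)(v(y|t)))$, and $G(u(\mathbf{0}),\cdots_x,u(v))(x|t)=G(u(\mathbf{0}),\cdots_x,u(v(x|t)))$. For $f:\mathbb{N}\to\mathbb{N}$, $\mathscr{M}_f$ is the structure with universe $\mathbb{N}$ interpreting $\mathbf{n}$ as $n$, $\tilde w$ as $w$, $\tilde p$ as $p$, $\tilde G$ as $G$, and $\mathbf{f}$ as $f$. Under an assignment $s$, terms are evaluated by the usual induction plus the clause $G(u(\mathbf{0}),\cdots_x,u(v))^{s}=G\big(u(x|\mathbf{0})^{s},\ldots,u(x|\overline{v^{s}})^{s}\big)$; satisfaction is then defined as usual. ''Querying $g(i)$'' means applying the interpretation $g$ of $\mathbf{f}$ to the argument $i$ during this inductive evaluation. *)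

(* Defs.v *)
From mathcomp Require Import all_boot.
Set Implicit Arguments. Unset Strict Implicit. Unset Printing Implicit Defensive.

(** An n-ary
                          symbol \tilde w (w : N^n -> N) applied to n terms is
                          represented by a function on sequences whose value on
                          length-n sequences is w; an N^{<N}-ary symbol
                          \tilde G is represented by G itself.
    - [TF t]            : the extra unary symbol f applied to t
    - [TEll G x u v]    : G(u(0), ..._x, u(v)). *)
Inductive term : Type :=
| TVar of nat
| TConst of nat
| TApp of (seq nat -> nat) & seq term
| TF of term
| TEll of (seq nat -> nat) & nat & term & term.

(** Quantifier-free formulas. An n-ary predicate symbol \tilde p
    (p subset of N^n) is represented by a predicate on sequences whose
    restriction to length-n sequences is p. *)
Inductive qfformula : Type :=
| FEq of term & term
| FPred of (seq nat -> Prop) & seq term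
| FFalse
| FNot of qfformula
| FAnd of qfformula & qfformula
| FOr of qfformula & qfformula
| FImp of qfformula & qfformula.

Fixpoint tfv (t : term) : seq nat :=
  match t with
  | TVar x => [:: x]
  | TConst _ => [::]
  | TApp _ ts => flatten (map tfv ts)
  | TF t => tfv t
  | TEll _ x u v => [seq y <- tfv u | y != x] ++ tfv v
  end.

Fixpoint ffv (phi : qfformula) : seq nat :=
  match phi with
  | FEq t1 t2 => tfv t1 ++ tfv t2
  | FPred _ ts => flatten (map tfv ts)
  | FFalse => [::]
  | FNot p => ffv p
  | FAnd p q | FOr p q | FImp p q => ffv p ++ ffv q
  end.

Definition qf_sentence (phi : qfformula) : Prop := ffv phi = [::].

Definition upd (s : nat -> nat) (x n : nat) : nat -> nat :=
  fun y => if y == x then n else s y.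

(** The clause for ellipsis terms is
    G(u(x|0)^s, ..., u(x|\bar{v^s})^s), where u(x|\bar j)^s is computed as
    u^{s[x:=j]} (substitution lemma for the closed numeral \bar j). *)
Fixpoint teval (g : nat -> nat) (s : nat -> nat) (t : term) : nat :=
  match t with
  | TVar x => s x
  | TConst n => n
  | TApp G ts => G (map (teval g s) ts)
  | TF t => g (teval g s t)
  | TEll G x u v =>
      G [seq teval g (upd s x j) u | j <- iota 0 (teval g s v).+1]
  end.

Fixpoint tqueries (g : nat -> nat) (s : nat -> nat) (t : term) : seq nat :=
  match t with
  | TVar _ => [::]
  | TConst _ => [::]
  | TApp _ ts => flatten (map (tqueries g s) ts)
  | TF t => tqueries g s t ++ [:: teval g s t]
  | TEll _ x u v =>
      tqueries g s v ++
      flatten [seq tqueries g (upd s x j) u | j <- iota 0 (teval g s v).+1]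
  end.

Fixpoint fsat (g : nat -> nat) (s : nat -> nat) (phi : qfformula) : Prop :=
  match phi with
  | FEq t1 t2 => teval g s t1 = teval g s t2
  | FPred p ts => p (map (teval g s) ts)
  | FFalse => False
  | FNot p => ~ fsat g s p
  | FAnd p q => fsat g s p /\ fsat g s q
  | FOr p q => fsat g s p \/ fsat g s q
  | FImp p q => fsat g s p -> fsat g s q
  end.

(** Queries made while checking satisfaction via the inductive definition
    (every atomic subformula is evaluated). *)
Fixpoint fqueries (g : nat -> nat) (s : nat -> nat) (phi : qfformula) : seq nat :=
  match phi with
  | FEq t1 t2 => tqueries g s t1 ++ tqueries g s t2
  | FPred _ ts => flatten (map (tqueries g s) ts)
  | FFalse => [::]
  | FNot p => fqueries g s p
  | FAnd p q | FOr p q | FImp p q => fqueries g s p ++ fqueries g s q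
  end.

(** For sentences the assignment is irrelevant; we use the constant-0 one. *)
Definition s0 : nat -> nat := fun _ => 0.

Definition models (g : nat -> nat) (phi : qfformula) : Prop := fsat g s0 phi.

Definition queries (g : nat -> nat) (phi : qfformula) : seq nat := fqueries g s0 phi.

(* Main.v *)
Require Import Defs.
From mathcomp Require Import all_boot.

Lemma mcl (a b : seq nat) (x : nat) : x \in a -> x \in a ++ b.
Proof. by rewrite mem_cat => ->. Qed.
Lemma mcr (a b : seq nat) (x : nat) : x \in b -> x \in a ++ b.
Proof. by rewrite mem_cat => ->; rewrite orbT. Qed.

Fixpoint myIn (a : term) (l : seq term) : Prop :=
  match l with [::] => False | b :: m => b = a \/ myIn a m end.

Section TermInd.
Variable P : term -> Prop.
Hypothesis HV : forall x, P (TVar x).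
Hypothesis HC : forall n, P (TConst n).
Hypothesis HA : forall G ts, (forall t, myIn t ts -> P t) -> P (TApp G ts).
Hypothesis HF : forall t, P t -> P (TF t).
Hypothesis HE : forall G x u v, P u -> P v -> P (TEll G x u v).
Fixpoint tind (t : term) : P t :=
  match t with
  | TVar x => HV x
  | TConst n => HC n
  | TApp G ts => @HA G ts
      ((fix F (l : seq term) : forall t, myIn t l -> P t :=
          match l with
          | [::] => fun t (H : myIn t [::]) => match H with end
          | a :: l' => fun t H =>
              match H with
              | or_introl e => @eq_ind term a P (tind a) t e
              | or_intror H' => F l' t H'
              end
          end) ts)
  | TF t => @HF t (tind t)
  | TEll G x u v => @HE G x u v (tind u) (tind v)
  end.
End TermInd.

Lemma term_agree (f g : nat -> nat) (t : term) : forall s,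
  (forall i, i \in tqueries f s t -> g i = f i) ->
  teval g s t = teval f s t /\ tqueries g s t = tqueries f s t.
Proof.
elim/tind: t => [x|n|G ts IHts|t IHt|G x u v IHu IHv] s H /=.
- by [].
- by [].
- have L : forall ts0 : seq term, (forall t, myIn t ts0 -> myIn t ts) ->
    (forall i, i \in flatten (map (tqueries f s) ts0) -> g i = f i) ->
    map (teval g s) ts0 = map (teval f s) ts0 /\
    flatten (map (tqueries g s) ts0) = flatten (map (tqueries f s) ts0).
    elim=> [|t0 ts0 IH] Hs H0 //=.
    have [e1 e2] := IHts t0 (Hs t0 (or_introl erefl)) s
      (fun i Hi => H0 i (@mcl _ _ _ Hi)).
    have [e3 e4] := IH (fun t Ht => Hs t (or_intror Ht))
      (fun i Hi => H0 i (@mcr _ _ _ Hi)).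
    by rewrite e1 e2 e3 e4.
  by have [-> ->] := L ts (fun t Ht => Ht) H.
- have [e1 e2] := IHt s (fun i Hi => H i (@mcl _ _ _ Hi)).
  have Hg : g (teval f s t) = f (teval f s t).
    by apply: H; rewrite mem_cat inE eqxx orbT.
  by rewrite e1 e2 Hg.
- have [e1 e2] := IHv s (fun i Hi => H i (@mcl _ _ _ Hi)).
  have E : forall j, j \in iota 0 (teval f s v).+1 ->
      teval g (upd s x j) u = teval f (upd s x j) u /\
      tqueries g (upd s x j) u = tqueries f (upd s x j) u.
    move=> j Hj; apply: IHu => i Hi; apply: H.
    rewrite mem_cat; apply/orP; right.
    apply/flattenP; exists (tqueries f (upd s x j) u) => //.
    by apply/mapP; exists j.
  have M1 : [seq teval g (upd s x j) u | j <- iota 0 (teval f s v).+1] =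
            [seq teval f (upd s x j) u | j <- iota 0 (teval f s v).+1].
    by apply/eq_in_map => j Hj; case: (E j Hj).
  have M2 : [seq tqueries g (upd s x j) u | j <- iota 0 (teval f s v).+1] =
            [seq tqueries f (upd s x j) u | j <- iota 0 (teval f s v).+1].
    by apply/eq_in_map => j Hj; case: (E j Hj).
  move: M1 (congr1 flatten M2) => /= M1 M3.
  rewrite e1 e2; split; first by rewrite M1.
  by rewrite M3.
Qed.

Lemma terms_agree (f g : nat -> nat) s (ts : seq term) :
  (forall i, i \in flatten (map (tqueries f s) ts) -> g i = f i) ->
  map (teval g s) ts = map (teval f s) ts /\
  flatten (map (tqueries g s) ts) = flatten (map (tqueries f s) ts).
Proof.
elim: ts => [|t ts IH] H //=.
have [e1 e2] := @term_agree f g _ s (fun i Hi => H i (@mcl _ _ _ Hi)).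
have [e3 e4] := IH (fun i Hi => H i (@mcr _ _ _ Hi)).
by rewrite e1 e2 e3 e4.
Qed.

Lemma form_agree (f g : nat -> nat) s (phi : qfformula) :
  (forall i, i \in fqueries f s phi -> g i = f i) ->
  (fsat g s phi <-> fsat f s phi) /\ fqueries g s phi = fqueries f s phi.
Proof.
elim: phi => [t1 t2|p ts| |p IH|p IHp q IHq|p IHp q IHq|p IHp q IHq] /= H.
- have [e1 e2] := @term_agree f g _ s (fun i Hi => H i (@mcl _ _ _ Hi)).
  have [e3 e4] := @term_agree f g _ s (fun i Hi => H i (@mcr _ _ _ Hi)).
  by rewrite e1 e2 e3 e4.
- by have [-> ->] := @terms_agree f g s ts H.
- by [].
- have [e1 e2] := IH H; rewrite e2; split=> //; tauto.
- have [e1 e2] := IHp (fun i Hi => H i (@mcl _ _ _ Hi)).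
  have [e3 e4] := IHq (fun i Hi => H i (@mcr _ _ _ Hi)).
  rewrite e2 e4; split=> //; tauto.
- have [e1 e2] := IHp (fun i Hi => H i (@mcl _ _ _ Hi)).
  have [e3 e4] := IHq (fun i Hi => H i (@mcr _ _ _ Hi)).
  rewrite e2 e4; split=> //; tauto.
- have [e1 e2] := IHp (fun i Hi => H i (@mcl _ _ _ Hi)).
  have [e3 e4] := IHq (fun i Hi => H i (@mcr _ _ _ Hi)).
  rewrite e2 e4; split=> //; tauto.
Qed.

Lemma le_foldr_max (l : seq nat) x : x \in l -> x <= foldr maxn 0 l.
Proof.
elim: l => [|a l IH] //=; rewrite inE => /orP [/eqP -> | /IH H].
  by rewrite leq_maxl.
by apply: leq_trans H (leq_maxr _ _).
Qed.

Theorem corollary3p6 (phi : qfformula) (Hphi : qf_sentence phi) (f : nat -> nat) :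
  models f phi <->
  exists k : nat, forall g : nat -> nat,
    (forall i, i <= k -> g i = f i) ->
    models g phi /\ (forall i, i \in queries g phi -> i <= k).
Proof.
split.
- move=> Hf; exists (foldr maxn 0 (queries f phi)) => g Hg.
  have [e1 e2] := @form_agree f g s0 phi
    (fun i Hi => Hg i (@le_foldr_max _ _ Hi)).
  split; first by apply/e1.
  by move=> i; rewrite /queries e2 => Hi; exact: (@le_foldr_max _ _ Hi).
- by move=> [k Hk]; case: (Hk f (fun _ _ => erefl)).
Qed.
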